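(* Let $E$ be an elliptic curve over $\mathbb{Q}$ in short Weierstrass form $y^2=x^3+Ax+B$ with $A,B\in\mathbb{Q}$. Suppose $E(\mathbb{R})$ has two connected components, and let $E^B(\mathbb{R})$ denote the bounded one. Then every rational point $Q\in E(\mathbb{Q})\cap E^B(\mathbb{R})$ satisfies $$\log|x(Q)|\le 4h(E).$$
   Context: For a rational number $a/b$ in lowest terms, $h(a/b)=\log\max\{|a|,|b|\}$. Let $\Delta=-16(4A^3+27B^2)$ be the discriminant of $E$ and $j=-1728(4A)^3/\Delta$ its $j$-invariant. The height of $E$ is $h(E)=\frac{1}{12}\max\{h(j),h(\Delta)\}$. *)

(* Defs.v *)
From Stdlib Require Import Reals QArith Qreals ZArith.
Open Scope R_scope.

Definition hQ (q : Q) : R :=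
  let r := Qred q in
  ln (IZR (Z.max (Z.abs (Qnum r)) (Zpos (Qden r)))).

Definition discE (A B : Q) : Q :=
  ((-16) * (4 * (A * A * A) + 27 * (B * B)))%Q.
Definition jE (A B : Q) : Q :=
  ((-1728) * ((4 * A) * (4 * A) * (4 * A)) / discE A B)%Q.

Definition hE (A B : Q) : R := / 12 * Rmax (hQ (jE A B)) (hQ (discE A B)).

Definition on_curve (A B : Q) (p : R * R) : Prop :=
  let (x, y) := p in y ^ 2 = x ^ 3 + Q2R A * x + Q2R B.

Definition open2 (U : R * R -> Prop) : Prop :=
  forall p, U p -> exists eps, eps > 0 /\
    forall q, Rabs (fst q - fst p) < eps -> Rabs (snd q - snd p) < eps -> U q.

Definition connected2 (C : R * R -> Prop) : Prop :=
  forall U V, open2 U -> open2 V ->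
    (forall p, C p -> U p \/ V p) ->
    (exists p, C p /\ U p) -> (exists p, C p /\ V p) ->
    exists p, C p /\ U p /\ V p.

Definition same_comp (S : R * R -> Prop) (p q : R * R) : Prop :=
  exists C : R * R -> Prop, (forall r, C r -> S r) /\ connected2 C /\ C p /\ C q.

Definition component (S : R * R -> Prop) (p : R * R) : R * R -> Prop :=
  fun q => S p /\ same_comp S p q.

Definition two_components (S : R * R -> Prop) : Prop :=
  exists p q, S p /\ S q /\ ~ same_comp S p q /\
    forall r, S r -> same_comp S r p \/ same_comp S r q.

Definition bounded2 (C : R * R -> Prop) : Prop :=
  exists M, forall p, C p -> Rabs (fst p) <= M /\ Rabs (snd p) <= M.

(* Main.v *)
Require Import Defs.
From Stdlib Require Import Reals QArith Qreals ZArith Lra Psatz Classical.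
Open Scope R_scope.

Lemma open_cont (W : R * R -> Prop) (h : R -> R) (c : R) :
  open2 W -> continuity_pt h c -> W (c, h c) ->
  exists d, d > 0 /\ forall t, Rabs (t - c) < d -> W (t, h t).
Proof.
  intros HW Hc Wc. destruct (HW _ Wc) as [e [He He2]].
  destruct (Hc e He) as [d [Hd Hd']].
  exists (Rmin e d). split. { apply Rmin_pos; lra. }
  intros t Ht. apply He2; simpl.
  - apply Rlt_le_trans with (Rmin e d); [exact Ht| apply Rmin_l].
  - destruct (Req_dec t c) as [->|Hne].
    + rewrite Rminus_diag, Rabs_R0; lra.
    + apply (Hd' t). split. { unfold D_x, no_cond. split; auto. }
      simpl. unfold R_dist. apply Rlt_le_trans with (Rmin e d); [exact Ht| apply Rmin_r].
Qed.

Lemma core (U V : R * R -> Prop) (h : R -> R) (a b : R) :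
  open2 U -> open2 V -> (forall t, continuity_pt h t) -> a <= b ->
  (forall t, a <= t <= b -> U (t, h t) \/ V (t, h t)) ->
  U (a, h a) -> V (b, h b) ->
  exists t, a <= t <= b /\ U (t, h t) /\ V (t, h t).
Proof.
  intros HU HV Hc Hab Hcov Ua Vb.
  set (E := fun t => a <= t <= b /\ U (t, h t)).
  assert (HB : bound E). { exists b. intros t [Ht _]. lra. }
  assert (HE : exists t, E t). { exists a. split; [lra|exact Ua]. }
  destruct (completeness E HB HE) as [c [Hub Hlub]].
  assert (Hac : a <= c). { apply Hub. split; [lra|exact Ua]. }
  assert (Hcb : c <= b). { apply Hlub. intros t [Ht _]. lra. }
  destruct (Hcov c (conj Hac Hcb)) as [Uc|Vc].
  - destruct (Req_dec c b) as [->|Hne].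
    + exists b. split; [lra|]. split; assumption.
    + exfalso. destruct (open_cont U h c HU (Hc c) Uc) as [d [Hd Hd']].
      set (t := Rmin b (c + d/2)).
      assert (Ht1 : c < t). { unfold t. apply Rmin_glb_lt; lra. }
      assert (Ht2 : t <= b) by apply Rmin_l.
      assert (Ht3 : t <= c + d/2) by apply Rmin_r.
      assert (Et : E t). { split; [lra|]. apply Hd'. rewrite Rabs_right; lra. }
      specialize (Hub t Et). lra.
  - destruct (open_cont V h c HV (Hc c) Vc) as [d [Hd Hd']].
    destruct (classic (exists t, E t /\ c - d < t)) as [[t [[Ht Ut] Htc]]|Hn].
    + exists t. split; [exact Ht|]. split; [exact Ut|]. apply Hd'.
      assert (t <= c) by (apply Hub; split; assumption).
      rewrite Rabs_left1; lra.
    + exfalso. assert (c <= c - d); [|lra].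
      apply Hlub. intros t Et. destruct (Rle_lt_dec t (c - d)) as [|Hl]; [assumption|].
      exfalso; apply Hn; exists t; split; assumption.
Qed.

Lemma conn_graph (h : R -> R) (x0 : R) :
  (forall t, continuity_pt h t) ->
  connected2 (fun p => x0 <= fst p /\ snd p = h (fst p)).
Proof.
  intros Hc U V HU HV Hcov [[p1 q1] [[H1 E1] U1]] [[p2 q2] [[H2 E2] V2]].
  simpl in *. subst q1 q2.
  assert (Hcov' : forall t, x0 <= t -> U (t, h t) \/ V (t, h t)).
  { intros t Ht. apply (Hcov (t, h t)). simpl; split; auto. }
  destruct (Rle_dec p1 p2) as [Hle|Hlt].
  - destruct (core U V h p1 p2 HU HV Hc Hle) as [t [Ht [Ut Vt]]]; auto.
    { intros t Ht. apply Hcov'. lra. }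
    exists (t, h t). simpl. repeat split; auto. lra.
  - destruct (core V U h p2 p1 HV HU Hc) as [t [Ht [Vt Ut]]]; auto. lra.
    { intros t Ht. destruct (Hcov' t) as [?|?]; [lra|right|left]; auto. }
    exists (t, h t). simpl. repeat split; auto. lra.
Qed.

Lemma exists_neg A B xr yr : on_curve A B (xr,yr) ->
  bounded2 (component (on_curve A B) (xr,yr)) ->
  exists t, xr < t /\ t^3 + Q2R A * t + Q2R B < 0.
Proof.
  intros Hon [M HM]. assert (Hon2 : yr^2 = xr^3 + Q2R A * xr + Q2R B) by exact Hon.
  apply NNPP; intro Hn.
  set (f := fun t => t^3 + Q2R A * t + Q2R B).
  assert (Hf : forall t, xr <= t -> 0 <= f t).
  { intros t Ht. destruct (Rle_lt_or_eq_dec _ _ Ht) as [Hl|<-].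
    - destruct (Rle_lt_dec 0 (f t)) as [|Hneg]; [assumption|].
      exfalso; apply Hn; exists t; split; assumption.
    - unfold f. rewrite <- Hon2. nra. }
  set (s := if Rle_dec 0 yr then 1 else -1).
  set (h := fun t => s * sqrt (Rabs (f t))).
  assert (Hc : forall t, continuity_pt h t).
  { intro t. unfold h. apply continuity_pt_mult. apply continuity_pt_const. intros ??; reflexivity.
    apply continuity_pt_comp with (f1 := fun t => Rabs (f t)).
    apply continuity_pt_comp with (f1 := f). unfold f.
    apply continuity_pt_plus. apply continuity_pt_plus.
    apply derivable_continuous_pt. apply derivable_pt_pow.
    apply continuity_pt_mult. apply continuity_pt_const. intros ??; reflexivity. apply derivable_continuous_pt, derivable_pt_id.
    apply continuity_pt_const. intros ??; reflexivity.
    apply Rcontinuity_abs.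
    apply continuity_pt_sqrt. apply Rabs_pos. }
  set (C := fun p : R * R => xr <= fst p /\ snd p = h (fst p)).
  assert (HC : connected2 C) by (apply conn_graph; exact Hc).
  assert (HCsub : forall r, C r -> on_curve A B r).
  { intros [p q] [Hp Hq]. simpl in *. subst q. change ((h p)^2 = p^3 + Q2R A * p + Q2R B). unfold h.
    rewrite Rabs_right by (apply Rle_ge, Hf; exact Hp).
    assert (Hs : s * s = 1) by (unfold s; destruct (Rle_dec 0 yr); lra).
    replace ((s * sqrt (f p)) ^ 2) with ((s*s) * (sqrt (f p) * sqrt (f p))) by ring.
    rewrite sqrt_sqrt by (apply Hf; exact Hp). rewrite Hs; unfold f; ring. } 
  assert (HCx : C (xr, yr)).
  { split; simpl; [lra|]. unfold h. rewrite Rabs_right by (apply Rle_ge, Hf; lra).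
    unfold f. rewrite <- Hon2.
    replace (yr ^ 2) with (Rsqr yr) by (unfold Rsqr; ring).
    rewrite sqrt_Rsqr_abs. unfold s. destruct (Rle_dec 0 yr).
    - rewrite Rabs_right; lra.
    - rewrite Rabs_left; lra. }
  set (t := Rmax xr (Rabs M + 1)).
  assert (Hcomp : component (on_curve A B) (xr, yr) (t, h t)).
  { split; [exact Hon|]. exists C. split; [exact HCsub|]. split; [exact HC|]. split; [exact HCx|].
    split; [unfold t; simpl; apply Rmax_l | reflexivity]. }
  destruct (HM _ Hcomp) as [H1 _]. simpl in H1.
  assert (Rabs M + 1 <= t) by apply Rmax_r.
  pose proof (Rle_abs M). pose proof (Rle_abs t). lra.
Qed.

Lemma ln_le' x y : 0 < x -> x <= y -> ln x <= ln y.
Proof. intros Hx Hxy. destruct (Rle_lt_or_eq_dec _ _ Hxy) as [H|<-].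
  - left; apply ln_increasing; auto.
  - right; reflexivity. Qed.

Lemma hQ_facts q : 0 <= hQ q /\ (Q2R q <> 0 -> ln (Rabs (Q2R q)) <= hQ q).
Proof.
  unfold hQ. assert (Hq : Q2R q = Q2R (Qred q)) by (apply Qeq_eqR; symmetry; apply Qred_correct).
  rewrite Hq. destruct (Qred q) as [n d]. simpl. unfold Q2R; simpl.
  assert (Hd : 1 <= IZR (Z.pos d)) by (apply IZR_le; lia).
  assert (Hm : IZR (Z.pos d) <= IZR (Z.max (Z.abs n) (Z.pos d))) by (apply IZR_le; lia).
  assert (Hm2 : Rabs (IZR n) <= IZR (Z.max (Z.abs n) (Z.pos d))) by (rewrite Rabs_Zabs; apply IZR_le; lia).
  split.
  - rewrite <- ln_1. apply ln_le'; lra.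
  - intro Hne. apply ln_le'. apply Rabs_pos_lt; exact Hne.
    rewrite Rabs_mult, Rabs_inv, (Rabs_right (IZR (Z.pos d))) by lra.
    apply Rle_trans with (Rabs (IZR n)); [|exact Hm2].
    rewrite <- (Rmult_1_r (Rabs (IZR n))) at 2.
    apply Rmult_le_compat_l; [apply Rabs_pos|].
    rewrite <- Rinv_1. apply Rinv_le_contravar; lra.
Qed.

Lemma Q2R_disc A B : Q2R (discE A B) = -16 * (4 * (Q2R A*Q2R A*Q2R A) + 27 * (Q2R B * Q2R B)).
Proof. unfold discE. rewrite !Q2R_mult, Q2R_plus, !Q2R_mult.
 replace (Q2R (-16)) with (-16) by (unfold Q2R; simpl; lra). replace (Q2R 4) with 4 by (unfold Q2R; simpl; lra). replace (Q2R 27) with 27 by (unfold Q2R; simpl; lra). ring. Qed.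

Lemma ln0 : ln 0 = 0.
Proof. unfold ln. destruct (Rlt_dec 0 0) as [h|h]; [exfalso; exact (Rlt_irrefl 0 h)|reflexivity]. Qed.

Theorem proposition2p2 (A B : Q)
  (hns : ~ (4 * (A * A * A) + 27 * (B * B) == 0)%Q)
  (h2 : two_components (on_curve A B))
  (xQ yQ : Q)
  (hQon : on_curve A B (Q2R xQ, Q2R yQ))
  (hbdd : bounded2 (component (on_curve A B) (Q2R xQ, Q2R yQ))) :
  ln (Rabs (Q2R xQ)) <= 4 * hE A B.
Proof.
  destruct (exists_neg A B _ _ hQon hbdd) as [t [Ht Hft]].
  set (x := Q2R xQ) in *. set (y := Q2R yQ) in *. set (a := Q2R A) in *.
  assert (Hon2 : y^2 = x^3 + a * x + Q2R B) by exact hQon.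
  assert (Hk : t^2 + t*x + x^2 + a < 0).
  { assert (Hd : (t - x) * (t^2 + t*x + x^2 + a) < 0).
    { replace ((t - x) * (t^2 + t*x + x^2 + a)) with
        ((t^3 + a*t + Q2R B) - (x^3 + a*x + Q2R B)) by ring.
      rewrite <- Hon2. nra. }
    destruct (Rlt_le_dec (t^2 + t*x + x^2 + a) 0) as [|Hge]; [assumption|].
    exfalso. assert (0 <= (t - x) * (t^2 + t*x + x^2 + a)) by (apply Rmult_le_pos; lra). lra. }
  assert (Hx2 : 3 * x^2 < -4 * a) by (pose proof (pow2_ge_0 (t + x/2)); nra).
  assert (Ha : a < 0) by (pose proof (pow2_ge_0 x); nra).
  destruct (hQ_facts (jE A B)) as [Hj0 Hj].
  destruct (hQ_facts (discE A B)) as [Hd0 Hd].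
  assert (HM0 : 0 <= Rmax (hQ (jE A B)) (hQ (discE A B))).
  { apply Rle_trans with (hQ (jE A B)); [exact Hj0| apply Rmax_l]. }
  unfold hE.
  destruct (Req_dec x 0) as [Hx0|Hx0].
  { rewrite Hx0, Rabs_R0. rewrite ln0. lra. }
  set (DD := Q2R (discE A B)).
  assert (HDD : DD <> 0).
  { unfold DD. rewrite Q2R_disc. intro Hz. apply hns. apply eqR_Qeq.
    rewrite Q2R_plus, !Q2R_mult. replace (Q2R 4) with 4 by (unfold Q2R; simpl; lra).
    replace (Q2R 27) with 27 by (unfold Q2R; simpl; lra). replace (Q2R 0) with 0 by (unfold Q2R; simpl; lra).
    fold a in Hz |- *. apply (Rmult_eq_reg_l (-16)); [rewrite Rmult_0_r; exact Hz|lra]. }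
  assert (Hjv : Q2R (jE A B) * DD = -1728 * (4*a)^3).
  { unfold jE. rewrite Q2R_div. fold DD. rewrite !Q2R_mult.
    replace (Q2R (-1728)) with (-1728) by (unfold Q2R; simpl; lra).
    replace (Q2R 4) with 4 by (unfold Q2R; simpl; lra). fold a. field. exact HDD.
    intro Hq. apply HDD. unfold DD. rewrite Hq. unfold Q2R; simpl; lra. }
  assert (Hjne : Q2R (jE A B) <> 0).
  { intro Hz. rewrite Hz in Hjv. assert (0 < (-a)^3) by (apply pow_lt; lra). nra. }
  assert (HP : Rabs (Q2R (jE A B)) * Rabs DD = 110592 * (-a)^3).
  { rewrite <- Rabs_mult, Hjv. rewrite Rabs_right. ring. assert (0 < (-a)^3) by (apply pow_lt; lra). apply Rle_ge. replace (-1728 * (4 * a) ^ 3) with (110592 * (-a)^3) by ring. lra. }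
  assert (Hax : 0 < Rabs x) by (apply Rabs_pos_lt; exact Hx0).
  assert (H6 : Rabs x ^ 6 < 110592 * (-a)^3).
  { replace (Rabs x ^ 6) with ((x^2)^3).
    2:{ rewrite <- pow2_abs. rewrite <- pow_mult. reflexivity. }
    apply Rle_lt_trans with ((-4*a/3)^3).
    - apply pow_incr. split; [apply pow2_ge_0|lra].
    - assert (0 < (-a)^3) by (apply pow_lt; lra).
      replace ((-4*a/3)^3) with (64/27 * (-a)^3) by (field). lra. }
  assert (Hln : ln (Rabs x ^ 6) < ln (Rabs (Q2R (jE A B))) + ln (Rabs DD)).
  { rewrite <- ln_mult by (apply Rabs_pos_lt; assumption). rewrite HP.
    apply ln_increasing; [apply pow_lt; exact Hax| exact H6]. }
  rewrite ln_pow in Hln by exact Hax.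
  specialize (Hj Hjne). specialize (Hd HDD). fold DD in Hd.
  pose proof (Rmax_l (hQ (jE A B)) (hQ (discE A B))).
  pose proof (Rmax_r (hQ (jE A B)) (hQ (discE A B))).
  simpl INR in Hln. lra.
Qed.
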